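(* Let $M,N$ be weights of $\mathbb{R}^m,\mathbb{R}^n$, and let $A\in\mathbb{R}^{m\times n}$ with $MA=AN$ (i.e. $I\circ A=A\circ I$) and $\mathcal{R}(A\circ I)$ closed. Let $K\subseteq\mathbb{R}^n$ be a closed cone with $A^{[\dagger]}\circ A\circ K\subseteq K$. Put $$C=A\circ I\circ K,\qquad D=(A^{[\dagger]})^{[*]}\circ I\circ K^{[*]}.$$ Then the following are equivalent: (i) $D$ is acute; (ii) $(A^{[*]}\circ A)^{[\dagger]}\circ K^{[*]}\subseteq K+\mathcal{N}(A\circ I)$; (iii) $C$ is obtuse.
   Context: A weight is a real symmetric matrix $W$ with $W^2=I$. $\mathbb{R}^m$ and $\mathbb{R}^n$ carry weights $M\in\mathbb{R}^{m\times m}$ and $N\in\mathbb{R}^{n\times n}$, respectively. The indefinite inner product on the space with weight $W$ is $[x,y]=\langle x,Wy\rangle$. Indefinite matrix product: if $B$ has $p$ columns and $C'$ has $p$ rows (or is a vector in $\mathbb{R}^p$), $p\in\{m,n\}$, and $W$ is the weight of $\mathbb{R}^p$, then $B\circ C':=BWC'$. $I$ denotes an identity matrix of the appropriate size. Indefinite adjoint of $B\in\mathbb{R}^{p\times q}$: $B^{[*]}:=W_qB^TW_p$, where $W_p,W_q$ are the weights of $\mathbb{R}^p,\mathbb{R}^q$. Indefinite Moore–Penrose inverse: for $B\in\mathbb{R}^{p\times q}$, $B^{[\dagger]}$ is the unique $X\in\mathbb{R}^{q\times p}$ such that - $B\circ X\circ B=B$, - $X\circ B\circ X=X$, - $(B\circ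 X)^{[*]}=B\circ X$, - $(X\circ B)^{[*]}=X\circ B$. It equals $W_qB^\dagger W_p$. Range and null space: for a matrix $B$ with $q$ columns, $\mathcal{R}(B)=\{B\circ x:x\in\mathbb{R}^q\}$ and $\mathcal{N}(B)=\{x\in\mathbb{R}^q:B\circ x=0\}$. A cone is a nonempty set closed under addition and under multiplication by nonnegative scalars. For $S$ a subset of $\mathbb{R}^p$ with weight $W$, the dual is $S^{[*]}=\{x\in\mathbb{R}^p:[x,t]\ge0\ \forall t\in S\}$. For a matrix $B$ and a set $S$, $B\circ S=\{B\circ s:s\in S\}$. The sum of sets is the Minkowski sum. A cone $L$ is acute if $[x,y]\ge0$ for all $x,y\in L$, equivalently $L\subseteq L^{[*]}$. The cone $C=A\circ I\circ K$ is called obtuse if $(A\circ I\circ K)^{[*]}\cap\mathcal{R}(A\circ I)$ is acute. *)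

(* Defs.v *)
From Stdlib Require Import Reals ClassicalEpsilon FunctionalExtensionality.
From HB Require Import structures.
From mathcomp Require Import all_boot all_order all_algebra.
Set Implicit Arguments. Unset Strict Implicit. Unset Printing Implicit Defensive.
Import Order.TTheory GRing.Theory Num.Theory.

Definition Reqb (x y : R) : bool := if Req_EM_T x y then true else false.
Lemma Reqb_axiom : Equality.axiom Reqb.
Proof. by move=> x y; rewrite /Reqb; case: Req_EM_T => h; constructor. Qed.
HB.instance Definition _ := hasDecEq.Build R Reqb_axiom.

Definition R_find (P : pred R) (n : nat) : option R :=
  if excluded_middle_informative (exists x, P x)
  then Some (epsilon (inhabits R0) (fun x => P x)) else None.
Lemma R_find_correct P n x : R_find P n = Some x -> P x.
Proof.
rewrite /R_find; case: excluded_middle_informative => // h [<-].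
exact: (epsilon_spec (inhabits R0) (fun x => P x) h).
Qed.
Lemma R_find_complete (P : pred R) : (exists x, P x) -> exists n, R_find P n.
Proof. by move=> h; exists 0%N; rewrite /R_find; case: excluded_middle_informative. Qed.
Lemma R_find_ext (P Q : pred R) : P =1 Q -> R_find P =1 R_find Q.
Proof. by move=> h; have -> : P = Q by apply: functional_extensionality. Qed.
HB.instance Definition _ := hasChoice.Build R R_find_correct R_find_complete R_find_ext.

Lemma R_addA : associative Rplus. Proof. by move=> x y z; rewrite Rplus_assoc. Qed.
Lemma R_addC : commutative Rplus. Proof. exact: Rplus_comm. Qed.
Lemma R_add0 : left_id R0 Rplus. Proof. exact: Rplus_0_l. Qed.
Lemma R_addN : left_inverse R0 Ropp Rplus. Proof. exact: Rplus_opp_l. Qed.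
HB.instance Definition _ := GRing.isZmodule.Build R R_addA R_addC R_add0 R_addN.

Lemma R_mulA : associative Rmult. Proof. by move=> x y z; rewrite Rmult_assoc. Qed.
Lemma R_mulC : commutative Rmult. Proof. exact: Rmult_comm. Qed.
Lemma R_mul1 : left_id R1 Rmult. Proof. exact: Rmult_1_l. Qed.
Lemma R_mulDl : left_distributive Rmult Rplus. Proof. by move=> x y z; rewrite Rmult_plus_distr_r. Qed.
Lemma R_one_neq0 : R1 != R0. Proof. by apply/eqP; exact: R1_neq_R0. Qed.
HB.instance Definition _ := GRing.Zmodule_isComNzRing.Build R R_mulA R_mulC R_mul1 R_mulDl R_one_neq0.

Local Open Scope ring_scope.
Definition R_inv (x : R) : R := if Reqb x R0 then R0 else Rinv x.
Lemma R_mulVf (x : R) : x != 0 -> (R_inv x * x)%R = 1%R.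
Proof.
move=> /eqP h; rewrite /R_inv /Reqb; destruct (Req_EM_T x R0) as [e|ne]; first by case: h.
exact: (Rinv_l x h).
Qed.
Lemma R_inv0 : R_inv 0 = 0.
Proof. by rewrite /R_inv /Reqb; case: Req_EM_T. Qed.
HB.instance Definition _ := GRing.ComNzRing_isField.Build R R_mulVf R_inv0.

Definition Rleb (x y : R) : bool := if Rle_dec x y then true else false.
Definition Rltb (x y : R) : bool := if Rlt_dec x y then true else false.
Lemma RlebP x y : reflect (Rle x y) (Rleb x y).
Proof. by rewrite /Rleb; case: Rle_dec => h; constructor. Qed.
Lemma RltbP x y : reflect (Rlt x y) (Rltb x y).
Proof. by rewrite /Rltb; case: Rlt_dec => h; constructor. Qed.

Lemma R_le0_add (x y : R) : Rleb 0 x -> Rleb 0 y -> Rleb 0 (x + y).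
Proof. move=> /RlebP hx /RlebP hy; apply/RlebP; exact: Rplus_le_le_0_compat. Qed.
Lemma R_le0_mul (x y : R) : Rleb 0 x -> Rleb 0 y -> Rleb 0 (x * y).
Proof. move=> /RlebP hx /RlebP hy; apply/RlebP; exact: Rmult_le_pos. Qed.
Lemma R_le0_anti (x : R) : Rleb 0 x -> Rleb x 0 -> x = 0.
Proof. move=> /RlebP hx /RlebP hy; exact: Rle_antisym. Qed.
Lemma R_sub_ge0 (x y : R) : Rleb 0 (y - x) = Rleb x y.
Proof.
apply/idP/idP => /RlebP h; apply/RlebP.
- have := Rplus_le_compat_r x _ _ h.
  by rewrite /GRing.add /GRing.opp /= Rplus_0_l Rplus_assoc Rplus_opp_l Rplus_0_r.
- have := Rplus_le_compat_r (- x)%R _ _ h.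
  by rewrite /GRing.add /GRing.opp /= Rplus_opp_r.
Qed.
Lemma R_le0_total (x : R) : Rleb 0 x || Rleb x 0.
Proof.
case: (Rle_dec R0 x) => h; first by apply/orP; left; apply/RlebP.
by apply/orP; right; apply/RlebP; apply: Rlt_le; apply: Rnot_le_lt.
Qed.
Lemma R_normN (x : R) : Rabs (- x) = Rabs x.
Proof. exact: Rabs_Ropp. Qed.
Lemma R_ge0_norm (x : R) : Rleb 0 x -> Rabs x = x.
Proof. by move=> /RlebP h; rewrite Rabs_right //; apply: Rle_ge. Qed.
Lemma R_lt_def (x y : R) : Rltb x y = (y != x) && Rleb x y.
Proof.
apply/idP/idP.
- move=> /RltbP h; apply/andP; split; last by apply/RlebP; apply: Rlt_le.
  by apply/eqP => e; move: h; rewrite e; apply: Rlt_irrefl.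
- move=> /andP[/eqP ne /RlebP le]; apply/RltbP.
  by case: (Rle_lt_or_eq_dec _ _ le) => // e; case: ne.
Qed.
HB.instance Definition _ := Num.IntegralDomain_isLeReal.Build R
  R_le0_add R_le0_mul R_le0_anti R_sub_ge0 R_le0_total R_normN R_ge0_norm R_lt_def.


Definition is_weight (p : nat) (W : 'M[R]_p) : Prop :=
  W^T = W /\ W *m W = 1%:M.

Definition iprod (p : nat) (W : 'M[R]_p) (x y : 'cV[R]_p) : R :=
  (x^T *m (W *m y)) ord0 ord0.

(* Indefinite matrix product B o C' := B W C', where B has p columns and W is *)
Definition imul (p q r : nat) (W : 'M[R]_p) (B : 'M[R]_(q, p)) (C : 'M[R]_(p, r))
  : 'M[R]_(q, r) := B *m W *m C.

Definition iadj (p q : nat) (Wp : 'M[R]_p) (Wq : 'M[R]_q) (B : 'M[R]_(p, q))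
  : 'M[R]_(q, p) := Wq *m B^T *m Wp.

Definition is_imp (p q : nat) (Wp : 'M[R]_p) (Wq : 'M[R]_q)
    (B : 'M[R]_(p, q)) (X : 'M[R]_(q, p)) : Prop :=
  [/\ imul Wp (imul Wq B X) B = B,
      imul Wq (imul Wp X B) X = X,
      iadj Wp Wp (imul Wq B X) = imul Wq B X &
      iadj Wq Wq (imul Wp X B) = imul Wp X B].

(* B^[dagger]: THE X satisfying the four equations (it exists and is unique). *)
Definition imp (p q : nat) (Wp : 'M[R]_p) (Wq : 'M[R]_q) (B : 'M[R]_(p, q))
  : 'M[R]_(q, p) := epsilon (inhabits 0) (is_imp Wp Wq B).

Definition vset (p : nat) := 'cV[R]_p -> Prop.

Definition vsubset (p : nat) (S T : vset p) : Prop := forall x, S x -> T x.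
Definition vinter (p : nat) (S T : vset p) : vset p := fun x => S x /\ T x.
Definition msum (p : nat) (S T : vset p) : vset p :=
  fun z => exists x y, S x /\ T y /\ z = x + y.

Definition imgs (p q : nat) (W : 'M[R]_p) (B : 'M[R]_(q, p)) (S : vset p) : vset q :=
  fun y => exists s, S s /\ y = imul W B s.

Definition irange (p q : nat) (W : 'M[R]_p) (B : 'M[R]_(q, p)) : vset q :=
  fun y => exists x, y = imul W B x.
Definition inull (p q : nat) (W : 'M[R]_p) (B : 'M[R]_(q, p)) : vset p :=
  fun x => imul W B x = 0.

Definition is_cone (p : nat) (K : vset p) : Prop :=
  [/\ exists x, K x,
      forall x y, K x -> K y -> K (x + y) &
      forall (a : R) x, 0 <= a -> K x -> K (a *: x)].

Definition enorm (p : nat) (x : 'cV[R]_p) : R :=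
  sqrt (\sum_(i < p) (x i ord0) ^+ 2).
Definition is_closed (p : nat) (S : vset p) : Prop :=
  forall x, (forall eps : R, 0 < eps -> exists y, S y /\ enorm (x - y) < eps) -> S x.

Definition idual (p : nat) (W : 'M[R]_p) (S : vset p) : vset p :=
  fun x => forall t, S t -> 0 <= iprod W x t.

Definition acute (p : nat) (W : 'M[R]_p) (L : vset p) : Prop :=
  forall x y, L x -> L y -> 0 <= iprod W x y.

Definition obtuse (m n : nat) (M : 'M[R]_m) (N : 'M[R]_n) (A : 'M[R]_(m, n))
    (K : vset n) : Prop :=
  acute M (vinter (idual M (imgs N (imul N A 1%:M) K)) (irange N (imul N A 1%:M))).

(* Main.v *)
Require Import Defs.
From Stdlib Require Import Reals ClassicalEpsilon Classical.
From HB Require Import structures.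
From mathcomp Require Import all_boot all_order all_algebra.
From mathcomp Require Import ring lra.
Set Implicit Arguments. Unset Strict Implicit. Unset Printing Implicit Defensive.
Import Order.TTheory GRing.Theory Num.Theory.
Local Open Scope ring_scope.


Lemma sumsq0 k (w : 'rV[R]_k) : (w *m w^T) ord0 ord0 = 0 -> w = 0.
Proof.
rewrite mxE => /eqP; rewrite psumr_eq0 => [/allP H|j _]; last first.
  by rewrite !mxE -expr2 sqr_ge0.
apply/rowP => j; rewrite mxE; have := H j (mem_index_enum j).
by rewrite mxE mulf_eq0 orbb => /eqP.
Qed.

Lemma gram_unit k r (G : 'M[R]_(k, r)) : row_free G -> (G *m G^T) \in unitmx.
Proof.
move=> fG; rewrite -row_free_unit; apply: inj_row_free => v H.
have: v *m G = 0.
  apply: sumsq0; rewrite trmx_mul mulmxA -(mulmxA v) H mul0mx mxE.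
  done.
by move=> H2; apply: (row_free_inj fG); rewrite H2 mul0mx.
Qed.

Definition is_mp p q (B : 'M[R]_(p, q)) (Y : 'M[R]_(q, p)) : Prop :=
  [/\ B *m Y *m B = B, Y *m B *m Y = Y, (B *m Y)^T = B *m Y & (Y *m B)^T = Y *m B].

Lemma mp_factor p q r (F : 'M[R]_(p, r)) (G : 'M[R]_(r, q)) :
  (G *m G^T) \in unitmx -> (F^T *m F) \in unitmx -> exists Y, is_mp (F *m G) Y.
Proof.
move=> uG uF.
set iG := invmx (G *m G^T); set iF := invmx (F^T *m F).
exists (G^T *m iG *m iF *m F^T).
have e1 : forall s (X : 'M_(r, s)), G *m (G^T *m (iG *m X)) = X.
  by move=> s X; rewrite !mulmxA mulmxV // mul1mx.
have e2 : forall s (X : 'M_(s, r)), X *m iF *m F^T *m F = X.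
  by move=> s X; rewrite -!mulmxA mulVmx // mulmx1.
have sG : iG^T = iG by rewrite /iG trmx_inv trmx_mul trmxK.
have sF : iF^T = iF by rewrite /iF trmx_inv trmx_mul trmxK.
have BY : F *m G *m (G^T *m iG *m iF *m F^T) = F *m iF *m F^T.
  by rewrite -!mulmxA e1.
have YB : (G^T *m iG *m iF *m F^T) *m (F *m G) = G^T *m iG *m G.
  by rewrite !mulmxA e2.
split.
- by rewrite BY !mulmxA e2.
- by rewrite YB -!mulmxA e1.
- by rewrite BY !trmx_mul trmxK sF mulmxA.
- by rewrite YB !trmx_mul trmxK sG mulmxA.
Qed.

Lemma mp_exists p q (B : 'M[R]_(p, q)) : exists Y, is_mp B Y.
Proof.
have uG := gram_unit (row_base_free B).
have fF : row_free (col_base B)^T by rewrite /row_free mxrank_tr; exact: col_base_full.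
have uF := gram_unit fF; rewrite trmxK in uF.
have [Y HY] := mp_factor uG uF.
by exists Y; rewrite -(mulmx_base B).
Qed.

Lemma mp_unique p q (B : 'M[R]_(p, q)) Y Z : is_mp B Y -> is_mp B Z -> Y = Z.
Proof.
case=> [h1 h2 h3 h4] [k1 k2 k3 k4].
have eY : Y = Y *m B *m Z.
  have e : (B *m Y)^T *m (B *m Z)^T = (B *m Y)^T.
    by rewrite -trmx_mul !mulmxA k1.
  transitivity (Y *m (B *m Y) *m (B *m Z)); last by rewrite !mulmxA h2.
  by rewrite -h3 -k3 -mulmxA e h3 mulmxA h2.
have eZ : Z = Y *m B *m Z.
  have e : (Y *m B)^T *m (Z *m B)^T = (Z *m B)^T.
    by rewrite -trmx_mul -!mulmxA (mulmxA B Y B) h1.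
  transitivity ((Y *m B) *m (Z *m B) *m Z); last by rewrite -(mulmxA _ (Z *m B)) k2.
  by rewrite -h4 -k4 e k4 k2.
by rewrite {1}eY -eZ.
Qed.

Lemma wK p (W : 'M[R]_p) : is_weight W -> forall q (X : 'M[R]_(p, q)), W *m (W *m X) = X.
Proof. by case=> _ h q X; rewrite mulmxA h mul1mx. Qed.

Lemma rnorm p q (B : 'M[R]_(p, q)) Y : (B *m Y)^T = B *m Y ->
  forall s (X : 'M[R]_(p, s)), Y^T *m (B^T *m X) = B *m (Y *m X).
Proof. by move=> h s X; rewrite mulmxA -trmx_mul h mulmxA. Qed.

Lemma imp_of_mp p q (Wp : 'M[R]_p) (Wq : 'M[R]_q) (B : 'M[R]_(p, q)) Y :
  is_weight Wp -> is_weight Wq -> is_mp B Y -> is_imp Wp Wq B (Wq *m Y *m Wp).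
Proof.
move=> hp hq [h1 h2 h3 h4].
have [sp _] := hp; have [sq _] := hq.
have r3 := rnorm h3; have r4 := rnorm h4.
have h2r : forall s (X : 'M_(p, s)), Y *m (B *m (Y *m X)) = Y *m X.
  by move=> s X; rewrite !mulmxA h2.
rewrite /is_imp /imul /iadj; split; rewrite ?trmx_mul ?sp ?sq -!mulmxA ?(wK hp) ?(wK hq) //.
- by rewrite mulmxA h1.
- by rewrite h2r.
- by case: hq => _ ->; rewrite mulmx1 -trmx_mul h4.
Qed.

Lemma mp_of_imp p q (Wp : 'M[R]_p) (Wq : 'M[R]_q) (B : 'M[R]_(p, q)) X :
  is_weight Wp -> is_weight Wq -> is_imp Wp Wq B X -> is_mp B (Wq *m X *m Wp).
Proof.
move=> hp hq [k1 k2 k3 k4]; move: k1 k2 k3 k4; rewrite /imul /iadj => k1 k2 k3 k4.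
have [sp ep] := hp; have [sq eq] := hq.
have k3' : (B *m Wq *m X)^T = Wp *m (B *m Wq *m X) *m Wp.
  by rewrite -{2}k3 -!mulmxA (wK hp) ep mulmx1.
have k4' : (X *m Wp *m B)^T = Wq *m (X *m Wp *m B) *m Wq.
  by rewrite -{2}k4 -!mulmxA (wK hq) eq mulmx1.
split.
- by rewrite !mulmxA k1.
- have k2r : forall s (Z : 'M_(p, s)), X *m (Wp *m (B *m (Wq *m (X *m Z)))) = X *m Z.
    by move=> s Z; rewrite !mulmxA k2.
  by rewrite -!mulmxA k2r.
- by rewrite !mulmxA trmx_mul sp k3' -!mulmxA (wK hp).
- have e : Wq *m X *m Wp *m B = Wq *m (X *m Wp *m B) by rewrite !mulmxA.
  by rewrite e trmx_mul k4' sq -!mulmxA eq mulmx1.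
Qed.

Lemma imp_mp p q (Wp : 'M[R]_p) (Wq : 'M[R]_q) (B : 'M[R]_(p, q)) :
  is_weight Wp -> is_weight Wq -> is_mp B (Wq *m imp Wp Wq B *m Wp).
Proof.
move=> hp hq; apply: mp_of_imp => //; rewrite /imp.
apply: (epsilon_spec (inhabits 0) (is_imp Wp Wq B)).
have [Y hY] := mp_exists B; exists (Wq *m Y *m Wp); exact: imp_of_mp.
Qed.
Definition dot n (u v : 'cV[R]_n) : R := \sum_(i < n) u i ord0 * v i ord0.

Lemma dotE n (u v : 'cV[R]_n) : (u^T *m v) ord0 ord0 = dot u v.
Proof. by rewrite mxE; apply: eq_bigr => i _; rewrite mxE. Qed.

Lemma dotC n (u v : 'cV[R]_n) : dot u v = dot v u.
Proof. by apply: eq_bigr => i _; rewrite mulrC. Qed.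

Lemma dotDl n (u v w : 'cV[R]_n) : dot (u + v) w = dot u w + dot v w.
Proof. by rewrite /dot -big_split; apply: eq_bigr => i _; rewrite mxE mulrDl. Qed.

Lemma dotZl n a (u w : 'cV[R]_n) : dot (a *: u) w = a * dot u w.
Proof. by rewrite /dot mulr_sumr; apply: eq_bigr => i _; rewrite mxE mulrA. Qed.

Lemma dotNl n (u w : 'cV[R]_n) : dot (- u) w = - dot u w.
Proof. by rewrite -scaleN1r dotZl mulN1r. Qed.

Lemma dotBl n (u v w : 'cV[R]_n) : dot (u - v) w = dot u w - dot v w.
Proof. by rewrite dotDl dotNl. Qed.

Lemma dotNr n (u w : 'cV[R]_n) : dot w (- u) = - dot w u.
Proof. by rewrite dotC dotNl dotC. Qed.

Lemma dot0l n (u : 'cV[R]_n) : dot 0 u = 0.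
Proof. by rewrite /dot big1 // => i _; rewrite mxE mul0r. Qed.

Lemma dotDr n (u v w : 'cV[R]_n) : dot w (u + v) = dot w u + dot w v.
Proof. by rewrite dotC dotDl !(dotC w). Qed.
Lemma dotZr n a (u w : 'cV[R]_n) : dot w (a *: u) = a * dot w u.
Proof. by rewrite dotC dotZl dotC. Qed.
Lemma dotBr n (u v w : 'cV[R]_n) : dot w (u - v) = dot w u - dot w v.
Proof. by rewrite dotC dotBl !(dotC w). Qed.

Lemma dot_ge0 n (u : 'cV[R]_n) : 0 <= dot u u.
Proof. by apply: sumr_ge0 => i _; rewrite -expr2 sqr_ge0. Qed.

Lemma dot_eq0 n (u : 'cV[R]_n) : dot u u = 0 -> u = 0.
Proof.
move=> /eqP; rewrite psumr_eq0 => [/allP H|j _]; last by rewrite -expr2 sqr_ge0.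
apply/colP => j; rewrite mxE; have := H j (mem_index_enum j).
by rewrite mulf_eq0 orbb => /eqP; rewrite (ord1 ord0).
Qed.

Lemma dot_coord n (u : 'cV[R]_n) c : u c ord0 * u c ord0 <= dot u u.
Proof.
rewrite /dot (bigD1 c) //= lerDl; apply: sumr_ge0 => i _; by rewrite -expr2 sqr_ge0.
Qed.

Lemma enormE n (u : 'cV[R]_n) : enorm u = sqrt (dot u u).
Proof. by rewrite /enorm; congr sqrt; apply: eq_bigr => i _; rewrite expr2. Qed.

Definition cvg (u : nat -> R) (l : R) :=
  forall eps : R, 0 < eps -> exists N, forall j, (N <= j)%N -> `|u j - l| < eps.

Lemma cvgP u l : cvg u l <-> Un_cv u l.
Proof.
split=> h eps he.
- have he' : 0 < eps by apply/RltbP.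
  have [N HN] := h eps he'; exists N => j /ssrnat.leP hj.
  by apply/RltbP; exact: HN.
- have he' : Rgt eps 0 by apply/RltbP.
  have [N HN] := h eps he'; exists N => j /ssrnat.leP hj.
  by apply/RltbP; exact: HN.
Qed.

Lemma cvg_ext u v l : (forall j, u j = v j) -> cvg u l -> cvg v l.
Proof. by move=> e h eps he; have [N HN] := h eps he; exists N => j hj; rewrite -e; exact: HN. Qed.

Lemma cvg_cst c : cvg (fun _ => c) c.
Proof. by move=> eps he; exists 0%N => j _; rewrite subrr normr0. Qed.

Lemma cvgD u v a b : cvg u a -> cvg v b -> cvg (fun j => u j + v j) (a + b).
Proof. by move=> /cvgP hu /cvgP hv; apply/cvgP; exact: CV_plus. Qed.

Lemma cvgM u v a b : cvg u a -> cvg v b -> cvg (fun j => u j * v j) (a * b).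
Proof. by move=> /cvgP hu /cvgP hv; apply/cvgP; exact: CV_mult. Qed.

Lemma cvgB u v a b : cvg u a -> cvg v b -> cvg (fun j => u j - v j) (a - b).
Proof. by move=> /cvgP hu /cvgP hv; apply/cvgP; exact: CV_minus. Qed.

Lemma cvg_uniq u a b : cvg u a -> cvg u b -> a = b.
Proof. by move=> /cvgP hu /cvgP hv; exact: UL_sequence hu hv. Qed.

Lemma cvg_sum (I : Type) (r : seq I) (g : I -> nat -> R) (l : I -> R) :
  (forall i, cvg (g i) (l i)) ->
  cvg (fun j => \sum_(i <- r) g i j) (\sum_(i <- r) l i).
Proof.
move=> h; elim: r => [|a r IH].
  by rewrite big_nil; apply: cvg_ext (cvg_cst 0) => j; rewrite big_nil.
rewrite big_cons; apply: cvg_ext (cvgD (h a) IH) => j; by rewrite big_cons.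
Qed.

Definition cauchy (u : nat -> R) :=
  forall eps : R, 0 < eps -> exists N, forall i j, (N <= i)%N -> (N <= j)%N -> `|u i - u j| < eps.

Lemma cauchy_cvg u : cauchy u -> exists l, cvg u l.
Proof.
move=> h; have hc : Cauchy_crit u.
  move=> eps he; have he' : 0 < eps by apply/RltbP.
  have [N HN] := h eps he'; exists N => i j /ssrnat.leP hi /ssrnat.leP hj.
  by apply/RltbP; exact: HN.
by have [l hl] := R_complete u hc; exists l; apply/cvgP.
Qed.

Lemma INRE n : INR n = n%:R.
Proof. elim: n => [//|n IH]; rewrite S_INR IH -natr1 //. Qed.

Lemma small_inv (e : R) : 0 < e -> exists N : nat, (N.+1%:R)^-1 < e.
Proof.
move=> he; have he' : Rlt 0 e by apply/RltbP.
have [N h1] := INR_archimed e 1 he'.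
exists N; move/RltbP: h1; rewrite INRE => h1.
rewrite -[_^-1]mul1r ltr_pdivrMr ?ltr0n // -natr1 mulrDr mulr1 (mulrC e).
have h2 : 1 < N%:R * e := h1.
lra.
Qed.

Lemma helperH (a b : R) : 0 <= b -> (forall t, 0 < t -> t <= 1 -> 0 <= a + t * b) -> 0 <= a.
Proof.
move=> hb H; rewrite leNgt; apply/negP => ha.
have hba : 0 < b - a by lra.
set t := - a / (b - a).
have et : t * (b - a) = - a by rewrite /t mulfVK // gt_eqF.
have t0 : 0 < t by rewrite /t divr_gt0 // oppr_gt0.
have t1 : t <= 1 by rewrite /t ler_pdivrMr // mul1r; lra.
have := H t t0 t1 => h.
have : 0 <= (a + t * b) * (b - a) by apply: mulr_ge0 => //; lra.
have -> : (a + t * b) * (b - a) = - (a * a).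
  by rewrite mulrDl -mulrA (mulrC b) mulrA et; ring.
have : 0 < a * a by rewrite nmulr_rgt0.
lra.
Qed.

Lemma sqr_lt (t e : R) : 0 < e -> t * t < e * e -> `|t| < e.
Proof.
move=> he h; rewrite ltNge; apply/negP => h2.
have : e * e <= `|t| * `|t| by apply: ler_pM => //; lra.
rewrite -normrM ger0_norm ?mul_self_ge0 //; last by rewrite -expr2 sqr_ge0.
lra.
Qed.

Lemma cvg_eql u a b : a = b -> cvg u a -> cvg u b.
Proof. by move=> ->. Qed.

Lemma bipolar n (K : vset n) : is_cone K -> is_closed K -> forall x,
  (forall y, (forall k, K k -> 0 <= dot y k) -> 0 <= dot y x) -> K x.
Proof.
move=> [[k0 Kk0] KD KZ] Kc x Hx.
apply: NNPP => nKx.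
pose f := fun k => dot (x - k) (x - k).
pose E := fun r : R => exists k, K k /\ r = - f k.
have bE : bound E.
  exists 0 => r [k [_ ->]]; apply/RlebP; change (- f k <= 0); rewrite oppr_le0; exact: dot_ge0.
have nE : exists r, E r by exists (- f k0), k0.
have [m [ub lub]] := completeness E bE nE.
pose d := - m.
have F1 : forall k, K k -> d <= f k.
  move=> k Kk; have /RlebP h : Rle (- f k) m by apply: ub; exists k.
  have h' : - f k <= m := h.
  rewrite /d; lra.
have F2 : forall e, 0 < e -> exists k, K k /\ f k < d + e.
  move=> e he; apply: NNPP => H.
  have /RlebP : Rle m (m - e).
    apply: lub => r [k [Kk ->]]; apply/RlebP.
    have : ~ (f k < d + e) by move=> h; apply: H; exists k.
    move/negP; rewrite -leNgt /d => h; change (- f k <= m - e); lra.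
  move=> h; have h' : m <= m - e := h.
  lra.
pose P j k := K k /\ f k < d + (j.+1%:R)^-1.
have hP : forall j, exists k, P j k.
  by move=> j; apply: F2; rewrite invr_gt0 ltr0n.
pose kk j := epsilon (inhabits 0) (P j).
have hkk : forall j, P j (kk j) := fun j => epsilon_spec _ _ (hP j).
have Khalf : forall a b, K a -> K b -> K ((2^-1 : R) *: (a + b)).
  move=> a b Ka Kb; apply: KZ; last exact: KD.
  by rewrite invr_ge0.
have par : forall a b, K a -> K b -> dot (a - b) (a - b) <= 2 * f a + 2 * f b - 4 * d.
  move=> a b Ka Kb; have := F1 _ (Khalf a b Ka Kb).
  rewrite /f !(dotDl, dotNl, dotZl, dotDr, dotNr, dotZr).
  rewrite ?[dot b a]dotC ?[dot a x]dotC ?[dot b x]dotC.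
  lra.
have fge : forall j, d <= f (kk j) by move=> j; apply: F1; case: (hkk j).
have flt : forall j, f (kk j) < d + (j.+1%:R)^-1 by move=> j; case: (hkk j).
have invle : forall N j, (N <= j)%N -> (j.+1%:R : R)^-1 <= (N.+1%:R)^-1.
  by move=> N j hj; rewrite lef_pV2 ?posrE ?ltr0n // ler_nat.
have cau : forall c, cauchy (fun j => kk j c ord0).
  move=> c eps he.
  have he2 : 0 < eps * eps / 4 by rewrite divr_gt0 ?mulr_gt0.
  have [N HN] := small_inv he2.
  exists N => i j hi hj; apply: sqr_lt => //.
  have h1 := par _ _ (proj1 (hkk i)) (proj1 (hkk j)).
  have h2 := dot_coord (kk i - kk j) c.
  rewrite !mxE in h2.
  have := flt i; have := flt j; have := fge i; have := fge j.
  have := invle _ _ hi; have := invle _ _ hj.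
  move: HN h1 h2; set E2 := eps * eps; set T := (kk i c ord0 - kk j c ord0) * _.
  set iN := N.+1%:R^-1; set iI := i.+1%:R^-1; set iJ := j.+1%:R^-1.
  set D := dot _ _.
  move=> HN h1 h2.
  have HN' : 4 * iN < E2 by move: HN; rewrite ltr_pdivlMr //; lra.
  lra.
pose lim c := epsilon (inhabits 0) (cvg (fun j => kk j c ord0)).
have hlim : forall c, cvg (fun j => kk j c ord0) (lim c).
  by move=> c; apply: epsilon_spec; apply: cauchy_cvg.
pose ks : 'cV[R]_n := \col_(c < n) lim c.
have cv1 : forall v, cvg (fun j => dot (v - kk j) (v - kk j)) (dot (v - ks) (v - ks)).
  move=> v.
  have H := @cvg_sum _ (index_enum 'I_n)
     (fun (c : 'I_n) (j : nat) => (v c ord0 - kk j c ord0) * (v c ord0 - kk j c ord0))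
     (fun c => (v c ord0 - lim c) * (v c ord0 - lim c))
     (fun c => cvgM (cvgB (cvg_cst _) (hlim c)) (cvgB (cvg_cst _) (hlim c))).
  apply: cvg_eql (cvg_ext _ H).
  - by rewrite /dot; apply: eq_bigr => c _; rewrite !mxE.
  - by move=> j; rewrite /dot; apply: eq_bigr => c _; rewrite !mxE.
have Kks : K ks.
  apply: Kc => eps he.
  have he2 : 0 < eps * eps by rewrite mulr_gt0.
  have [N HN] := cv1 ks _ he2.
  exists (kk N); split; first by case: (hkk N).
  have := HN N (leqnn N); rewrite subrr dot0l subr0 => h.
  have h0 := dot_ge0 (ks - kk N).
  rewrite enormE; apply/RltbP.
  have -> : eps = sqrt (eps * eps) by rewrite sqrt_square //; apply/RlebP; change (0 <= eps); exact: ltW.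
  apply: sqrt_lt_1_alt; split; first by apply/RlebP.
  by apply/RltbP; move: h; rewrite ger0_norm.
have fks : f ks = d.
  apply: (cvg_uniq (cv1 x)); rewrite /cvg => eps he.
  have [N HN] := small_inv he.
  exists N => j hj; rewrite ger0_norm; last by rewrite subr_ge0 fge.
  have := flt j; have := invle _ _ hj; move: HN.
  rewrite -/(f (kk j)); set a := f (kk j); set b := N.+1%:R^-1; set c := j.+1%:R^-1.
  move=> *; lra.
pose w := x - ks.
have fw : dot w w = d by [].
have var1 : forall k, K k -> dot w k <= 0.
  move=> k Kk.
  suff : 0 <= - (2 * dot w k) by lra.
  apply: (helperH (dot_ge0 k)) => t t0 t1.
  have Kt : K (ks + t *: k) by apply: KD => //; apply: KZ => //; exact: ltW.
  have := F1 _ Kt.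
  have -> : f (ks + t *: k) = d - 2 * t * dot w k + t * t * dot k k.
    rewrite /f (_ : x - (ks + t *: k) = w - t *: k); last first.
      by apply/matrixP => i l; rewrite !mxE; ring.
    rewrite -fks /f !(dotDl, dotNl, dotZl, dotDr, dotNr, dotZr).
    rewrite ?[dot ks x]dotC ?[dot k x]dotC ?[dot k ks]dotC; ring.
  move=> h.
  have : 0 <= t * (- (2 * dot w k) + t * dot k k) by rewrite mulrDr; lra.
  by rewrite pmulr_rge0.
have var2 : 0 <= dot w ks.
  suff : 0 <= 2 * dot w ks by lra.
  apply: (helperH (dot_ge0 ks)) => t t0 t1.
  have Kt : K ((1 - t) *: ks) by apply: KZ => //; lra.
  have := F1 _ Kt.
  have -> : f ((1 - t) *: ks) = d + 2 * t * dot w ks + t * t * dot ks ks.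
    rewrite /f (_ : x - (1 - t) *: ks = w + t *: ks); last first.
      by apply/matrixP => i l; rewrite !mxE; ring.
    rewrite -fks /f !(dotDl, dotNl, dotZl, dotDr, dotNr, dotZr).
    rewrite ?[dot ks x]dotC; ring.
  move=> h.
  have : 0 <= t * (2 * dot w ks + t * dot ks ks) by rewrite mulrDr; lra.
  by rewrite pmulr_rge0.
have := Hx (- w).
rewrite dotNl oppr_ge0 => Hw.
have : dot w x <= 0.
  apply: Hw => k Kk; rewrite dotNl oppr_ge0; exact: var1.
have -> : dot w x = dot w w + dot w ks.
  by rewrite -dotDr /w subrK.
have := var1 _ Kks => h1 h2.
have w0 : dot w w = 0 by have := dot_ge0 w; lra.
apply: nKx; have := dot_eq0 w0; rewrite /w => /eqP; rewrite subr_eq0 => /eqP ->.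
exact: Kks.
Qed.

Lemma dot_mull p q (B : 'M[R]_(p, q)) (u : 'cV[R]_q) (v : 'cV[R]_p) :
  dot (B *m u) v = dot u (B^T *m v).
Proof. by rewrite -!dotE trmx_mul mulmxA. Qed.

Lemma iprodE p (W : 'M[R]_p) x y : iprod W x y = dot x (W *m y).
Proof. by rewrite /iprod dotE. Qed.

Lemma dot_orth p (W : 'M[R]_p) u v : is_weight W -> dot (W *m u) (W *m v) = dot u v.
Proof. by move=> hW; rewrite dot_mull; have [-> _] := hW; rewrite (wK hW). Qed.

Unset Implicit Arguments.

Theorem theorem3p16 (m n : nat) (M : 'M[R]_m) (N : 'M[R]_n)
    (A : 'M[R]_(m, n)) (K : vset n) :
  is_weight M -> is_weight N ->
  imul M 1%:M A = imul N A 1%:M ->                      (* I o A = A o I *)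
  is_closed (irange N (imul N A 1%:M)) ->               (* R(A o I) closed *)
  is_cone K -> is_closed K ->
  vsubset (imgs N (imul M (imp M N A) A) K) K ->          (* A^[+] o A o K <= K *)
  let D := imgs N (imul N (iadj N M (imp M N A)) 1%:M) (idual N K) in
                                                         (* D = (A^[+])^[*] o I o K^[*] *)
  (acute M D <->
     vsubset (imgs N (imp N N (imul M (iadj M N A) A)) (idual N K))
            (msum K (inull N (imul N A 1%:M)))) /\
  (vsubset (imgs N (imp N N (imul M (iadj M N A) A)) (idual N K))
          (msum K (inull N (imul N A 1%:M))) <->
     obtuse M N A K).                                   (* C = A o I o K obtuse *)
Proof.
move=> hM hN hMA _ hK Kc hP D.
have [sM eM] := hM; have [sN eN] := hN.
have MA : M *m A = A *m N by move: hMA; rewrite /imul mul1mx mulmx1.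
set X := imp M N A.
have hY0 := @imp_mp _ _ M N A hM hN; rewrite -/X in hY0.
set Y := N *m X *m M in hY0.
have eX : X = N *m Y *m M by rewrite /Y -!mulmxA (wK hN) eM mulmx1.
have eX' : imp M N A = N *m Y *m M := eX.
clearbody Y.
move: hP; rewrite /D eX' => hP.
have [h1 h2 h3 h4] := hY0.
have h1r : forall k (Z : 'M_(n, k)), A *m (Y *m (A *m Z)) = A *m Z.
  by move=> k Z; rewrite !mulmxA h1.
have h1e : A *m (Y *m A) = A by rewrite mulmxA h1.
have h2r : forall k (Z : 'M_(m, k)), Y *m (A *m (Y *m Z)) = Y *m Z.
  by move=> k Z; rewrite !mulmxA h2.
have h2e : Y *m (A *m Y) = Y by rewrite mulmxA h2.
have r3 := rnorm h3; have r4 := rnorm h4.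
have MAr : forall k (Z : 'M_(n, k)), M *m (A *m Z) = A *m (N *m Z).
  by move=> k Z; rewrite !mulmxA MA.
have AMN : A *m N = M *m A by [].
have mpY' : is_mp A (N *m Y *m M).
  split.
  - by rewrite -!mulmxA MA -MAr h1r -MA (wK hM).
  - by rewrite -!mulmxA MAr (wK hN) h2r.
  - have e : A *m (N *m Y *m M) = M *m (A *m Y) *m M by rewrite -!mulmxA -MAr.
    by rewrite e trmx_mul trmx_mul h3 sM !mulmxA.
  - have e : N *m Y *m M *m A = N *m (Y *m A) *m N by rewrite -!mulmxA MA.
    by rewrite e trmx_mul trmx_mul h4 sN !mulmxA.
have NYM : N *m Y *m M = Y := mp_unique mpY' hY0.
have NY : N *m Y = Y *m M by rewrite -{2}NYM -!mulmxA eM mulmx1.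
have t1e : A^T *m (A *m Y) = A^T by rewrite -h3 -trmx_mul h1.
have t1 : forall k (Z : 'M_(m, k)), A^T *m (A *m (Y *m Z)) = A^T *m Z.
  by move=> k Z; rewrite [A *m (Y *m Z)]mulmxA mulmxA t1e.
have eB2 : imul M (iadj M N A) A = N *m A^T *m A.
  by rewrite /imul /iadj -!mulmxA (wK hM).
have mpY2 : is_mp (N *m A^T *m A) (Y *m Y^T *m N).
  split.
  - by rewrite -!mulmxA (wK hN) r3 h1r h1e.
  - by rewrite -!mulmxA (wK hN) r3 !h2r.
  - have e : N *m A^T *m A *m (Y *m Y^T *m N) = Y *m A.
      by rewrite -!mulmxA t1 r4 mulmxA NY -mulmxA MAr eN mulmx1.
    by rewrite e h4.
  - have e : Y *m Y^T *m N *m (N *m A^T *m A) = Y *m A.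
      by rewrite -!mulmxA (wK hN) r3 !mulmxA h2.
    by rewrite e h4.
set Z := imp N N (imul M (iadj M N A) A).
have hZ := @imp_mp _ _ N N (imul M (iadj M N A) A) hN hN.
rewrite -/Z eB2 in hZ.
have eZ : Z = N *m Y *m Y^T.
  have := mp_unique hZ mpY2 => e.
  transitivity (N *m (N *m Z *m N) *m N).
    by rewrite -!mulmxA (wK hN) eN mulmx1.
  by rewrite e -!mulmxA eN mulmx1.
clearbody Z.
have eA : forall (s : 'cV[R]_n), imul N (imul N A 1%:M) s = A *m s.
  by move=> s; rewrite /imul mulmx1 -!mulmxA (wK hN).
have eDs : forall (s : 'cV[R]_n), imul N (imul N (iadj N M (N *m Y *m M)) 1%:M) s = Y^T *m s.
  move=> s; rewrite /imul /iadj !trmx_mul sN sM mulmx1 -!mulmxA (wK hM).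
  by rewrite !(wK hN).
have eZs : forall (s : 'cV[R]_n), imul N Z s = N *m (Y *m (Y^T *m (N *m s))).
  by move=> s; rewrite /imul eZ -!mulmxA.
have hPK : forall (s : 'cV[R]_n), K s -> K (Y *m (A *m s)).
  move=> s Ks; apply: hP; exists s; split => //.
  rewrite /imul -!mulmxA (wK hM) [N *m (Y *m _)]mulmxA NY -mulmxA MAr.
  by rewrite (wK hN).
pose dual (s : 'cV[R]_n) := forall t, K t -> 0 <= dot s (N *m t).
have hdual : forall (s : 'cV[R]_n), idual N K s <-> dual s.
  by move=> s; split => h t Kt; have := h t Kt; rewrite iprodE.
have hmsum : forall (z : 'cV[R]_n), msum K (inull N (imul N A 1%:M)) z <-> K (Y *m (A *m z)).
  move=> z; split.
  - move=> [a [b [Ka [Ab ->]]]]; move: Ab; rewrite /inull eA => Ab.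
    by rewrite mulmxDr Ab addr0; exact: hPK.
  - move=> Kz; exists (Y *m (A *m z)), (z - Y *m (A *m z)); split => //; split.
      by rewrite /inull eA mulmxBr h1r subrr.
    by rewrite addrC subrK.
have YAv : forall (s : 'cV[R]_n), Y *m (A *m (N *m (Y *m (Y^T *m (N *m s))))) =
                     N *m (Y *m (Y^T *m (N *m s))).
  move=> s; rewrite -MAr mulmxA -NY -mulmxA h2r //.
pose PI := forall (s s' : 'cV[R]_n), dual s -> dual s' -> 0 <= dot (Y^T *m s) (M *m (Y^T *m s')).
pose PII := forall (s : 'cV[R]_n), dual s -> K (N *m (Y *m (Y^T *m (N *m s)))).
have eI : acute M (imgs N (imul N (iadj N M (N *m Y *m M)) 1%:M) (idual N K)) <-> PI.
  split.
  - move=> hac s s' ds ds'; rewrite -iprodE; apply: hac.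
      by exists s; split; [apply/hdual | rewrite eDs].
    by exists s'; split; [apply/hdual | rewrite eDs].
  - move=> hI x y [s [ds ->]] [s' [ds' ->]]; rewrite iprodE !eDs.
    by apply: hI; apply/hdual.
have eII : vsubset (imgs N Z (idual N K)) (msum K (inull N (imul N A 1%:M))) <-> PII.
  split.
  - move=> h s ds; have := h (imul N Z s).
    rewrite hmsum eZs YAv; apply; exists s; split => //; exact/hdual.
  - move=> hII y [s [ds ->]]; rewrite hmsum eZs YAv; apply: hII; exact/hdual.
have eI_II : PI <-> PII.
  split.
  - move=> hI s ds; apply: (bipolar hK Kc) => y hy.
    have ds' : dual (N *m y) by move=> t Kt; rewrite dot_orth //; exact: hy.
    have := hI s (N *m y) ds ds'.
    have e : N *m (Y *m (Y^T *m (N *m y))) = (N *m Y *m Y^T *m N) *m y by rewrite -!mulmxA.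
    rewrite dot_mull trmxK [Y *m (M *m _)]mulmxA -NY -mulmxA dotC e dot_mull.
    by rewrite !trmx_mul trmxK sN -!mulmxA.
  - move=> hII s s' ds ds'.
    have := ds' _ (hII s ds); rewrite (wK hN).
    have e : N *m (Y *m (Y^T *m s')) = (N *m Y *m Y^T) *m s' by rewrite -!mulmxA.
    suff -> : dot (Y^T *m s) (M *m (Y^T *m s')) = dot s' (Y *m (Y^T *m (N *m s))) by [].
    rewrite dot_mull trmxK [Y *m (M *m _)]mulmxA -NY -mulmxA dotC e dot_mull.
    by rewrite !trmx_mul trmxK sN -!mulmxA.
have eII_III : PII -> obtuse M N A K.
  move=> hII u u' [hu [z eu]] [hu' [z' eu']]; subst u u'; rewrite iprodE (eA z) (eA z').
  pose s := N *m (A^T *m (M *m (A *m z'))).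
  have ds : dual s.
    move=> t Kt; rewrite /s dot_orth // dot_mull trmxK dot_mull sM.
    have := hu' (A *m t); rewrite iprodE (eA z'); apply.
    by exists t; split => //; rewrite (eA t).
  have Kv := hII s ds.
  rewrite /s (wK hN) r3 h2r [N *m (Y *m _)]mulmxA NY -mulmxA (wK hM) in Kv.
  have := hu (A *m (Y *m (A *m z'))); rewrite iprodE (eA z) h1r; apply.
  by exists (Y *m (A *m z')); split => //; rewrite (eA (Y *m (A *m z'))).
have eIII_I : obtuse M N A K -> PI.
  move=> hob s s' ds ds'.
  have eYT : forall (w : 'cV[R]_n), Y^T *m w = A *m (Y *m (Y^T *m w)).
    have e : Y^T = A *m Y *m Y^T by rewrite -{1}h2 -h3 !trmx_mul mulmxA.
    by move=> w; rewrite {1}e -!mulmxA.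
  have mem : forall w, dual w ->
      vinter (idual M (imgs N (imul N A 1%:M) K)) (irange N (imul N A 1%:M)) (Y^T *m w).
    move=> w dw; split.
    - move=> t [t0 [Kt0 ->]]; rewrite iprodE (eA t0) dot_mull trmxK [Y *m (M *m _)]mulmxA.
      by rewrite -NY -mulmxA; exact: dw _ (hPK _ Kt0).
    - by exists (Y *m (Y^T *m w)); rewrite (eA (Y *m (Y^T *m w))) -eYT.
  by have := hob _ _ (mem s ds) (mem s' ds'); rewrite iprodE.
rewrite eI eII; split => //; split => //.
by move=> h; apply/eI_II; apply: eIII_I.
Qed.
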